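(* The class of finite linear orders has the Rank Property: for every countable ordinal $\alpha$ there is a countable linear order $X$ with $\mathsf{rk}(X)=\alpha$.
   Context: Let $\mathcal F$ be the class of finite linear orders (language $\{<\}$); countable linear orders are the structures considered; substructures are suborders and $\mathsf{age}(X)$ is the set of finite suborders of $X$. For $A\le B$, $B$ is a prime extension of $A$ if $|B\setminus A|=1$; a realization of $B$ in $X$ (where $A\le X$) is $C\le X$ with $A\le C$ and an order-isomorphism $B\to C$ fixing $A$ pointwise. For $F\in\mathsf{age}(X)$ define by recursion: $\mathsf{rk}_X(F)\ge0$ always; $\mathsf{rk}_X(F)\ge\alpha+1$ iff every prime extension $B\in\mathcal F$ of $F$ has a realization $C$ in $X$ with $\mathsf{rk}_X(C)\ge\alpha$; for limit $\alpha$, $\mathsf{rk}_X(F)\ge\alpha$ iff $\mathsf{rk}_X(F)\ge\beta$ for all $\beta<\alpha$. $\mathsf{rk}_X(F)=\sup\{\alpha:\mathsf{rk}_X(F)\ge\alpha\}$ (or $\infty$ if this holds for all ordinals), and $\mathsf{rk}(X)=\mathsf{rk}_X(\emptyset)$. *)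

(* Defs.v *)
From Stdlib Require Import List.
Set Implicit Arguments.

Definition strict_linear (T : Type) (lt : T -> T -> Prop) : Prop :=
  (forall x, ~ lt x x) /\
  (forall x y z, lt x y -> lt y z -> lt x z) /\
  (forall x y, lt x y \/ x = y \/ lt y x).

Definition countable (T : Type) : Prop :=
  exists f : T -> nat, forall x y, f x = f y -> x = y.

Definition finite_type (T : Type) : Prop :=
  exists l : list T, forall x, In x l.

Definition finite_subset (T : Type) (A : T -> Prop) : Prop :=
  exists l : list T, forall x, A x -> In x l.

(* A prime extension B in the class of finite linear orders of the finite
   suborder A of X = (T, lt): a finite linear order B together with an
   embedding of A onto a suborder of B missing exactly one point of B. *)
Record prime_ext (T : Type) (lt : T -> T -> Prop) (A : T -> Prop) := PrimeExt {
  pe_car : Type;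
  pe_lt : pe_car -> pe_car -> Prop;
  pe_emb : {x | A x} -> pe_car;
  pe_linear : strict_linear pe_lt;
  pe_finite : finite_type pe_car;
  pe_emb_order : forall a b : {x | A x},
      pe_lt (pe_emb a) (pe_emb b) <-> lt (proj1_sig a) (proj1_sig b);
  pe_one_new : exists z, (forall a, pe_emb a <> z) /\
                         (forall y, (forall a, pe_emb a <> y) -> y = z)
}.

Definition realizes (T : Type) (lt : T -> T -> Prop) (A : T -> Prop)
    (B : prime_ext lt A) (C : T -> Prop) : Prop :=
  finite_subset C /\ (forall x, A x -> C x) /\
  exists g : pe_car B -> T,
    (forall y, C (g y)) /\
    (forall c, C c -> exists y, g y = c) /\
    (forall y1 y2, g y1 = g y2 -> y1 = y2) /\
    (forall y1 y2, pe_lt B y1 y2 <-> lt (g y1) (g y2)) /\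
    (forall a : {x | A x}, g (pe_emb B a) = proj1_sig a).

(* One step of the recursive definition of "rk_X(F) >= w", for w an element
   of a well-order (O, ltO) (an ordinal).  The first conjunct is the
   successor clause (w = v+1, v the immediate predecessor of w); the second
   is the limit clause (w has predecessors but no largest one).  For w = 0
   (no predecessors) both are vacuous, so rk_X(F) >= 0 always. *)
Definition rk_step (T : Type) (lt : T -> T -> Prop) (O : Type)
    (ltO : O -> O -> Prop) (w : O)
    (rec : forall v, ltO v w -> (T -> Prop) -> Prop) (F : T -> Prop) : Prop :=
  (forall v (h : ltO v w), (forall u, ltO u w -> ~ ltO v u) ->
     forall B : prime_ext lt F, exists C, realizes B C /\ rec v h C)
  /\
  ((forall v, ltO v w -> exists u, ltO v u /\ ltO u w) ->
     forall v (h : ltO v w), rec v h F).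

Definition rkge (T : Type) (lt : T -> T -> Prop) (O : Type)
    (ltO : O -> O -> Prop) (wf : well_founded ltO) : O -> (T -> Prop) -> Prop :=
  Fix wf (fun _ => (T -> Prop) -> Prop) (rk_step lt ltO).

(* Given an ordinal alpha presented as a well-order W, W + bool presents the
   ordinal alpha + 2: inl w are the ordinals < alpha, inr false = alpha,
   inr true = alpha + 1. *)
Definition ext_lt (W : Type) (ltW : W -> W -> Prop) (x y : W + bool) : Prop :=
  match x, y with
  | inl a, inl b => ltW a b
  | inl _, inr _ => True
  | inr false, inr true => True
  | _, _ => False
  end.

Lemma ext_lt_wf (W : Type) (ltW : W -> W -> Prop) :
  well_founded ltW -> well_founded (ext_lt ltW).
Proof.
  intros hW.
  assert (HL : forall a, Acc (ext_lt ltW) (inl a)).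
  { intros a; induction (hW a) as [a _ IH]; constructor.
    intros [b|[|]] hb; simpl in hb; try contradiction; auto. }
  assert (HF : Acc (ext_lt ltW) (inr false)).
  { constructor; intros [b|[|]] hb; simpl in hb; try contradiction; auto. }
  intros [a|[|]]; auto.
  constructor; intros [b|[|]] hb; simpl in hb; try contradiction; auto.
Qed.

(* rk(X) = alpha, where X = (T, lt) and alpha is the order type of (W, ltW):
   for every ordinal gamma <= alpha + 1,  rk_X(empty) >= gamma  iff
   gamma <= alpha (i.e. gamma < alpha + 1). *)
Definition rank_is (T : Type) (lt : T -> T -> Prop) (W : Type)
    (ltW : W -> W -> Prop) (hW : well_founded ltW) : Prop :=
  forall g : W + bool,
    rkge lt (ext_lt_wf hW) g (fun _ => False) <-> ext_lt ltW g (inr true).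

(* Main.v *)
Require Import Defs.
From Stdlib Require Import List Classical ClassicalEpsilon FunctionalExtensionality ProofIrrelevance Cantor.
Import ListNotations.

Lemma rkge_eq (T : Type) (lt : T -> T -> Prop) (O : Type) (ltO : O -> O -> Prop)
  (wf : well_founded ltO) w F :
  rkge lt wf w F <-> rk_step lt ltO w (fun v _ => rkge lt wf v) F.
Proof.
  unfold rkge at 1. rewrite Fix_eq. reflexivity.
  intros x f g H.
  assert (f = g) by (apply functional_extensionality_dep; intro;
    apply functional_extensionality_dep; intro; apply H).
  subst; reflexivity.
Qed.

Definition region {T} (lt : T -> T -> Prop) (F P : T -> Prop) (t : T) : Prop :=
  ~ F t /\ forall f, F f -> (lt f t <-> P f).

Definition dcut {T} (lt : T -> T -> Prop) (F P : T -> Prop) : Prop :=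
  (forall f, P f -> F f) /\ (forall f g, F f -> F g -> lt f g -> P g -> P f).

Lemma sig_eq {T} (F : T -> Prop) (a b : {x | F x}) : proj1_sig a = proj1_sig b -> a = b.
Proof.
  destruct a as [a ha], b as [b hb]; simpl; intros E; subst.
  f_equal; apply proof_irrelevance.
Qed.

Definition Blt {T} (lt : T -> T -> Prop) (F P : T -> Prop) (a b : option {x | F x}) : Prop :=
  match a, b with
  | Some a, Some b => lt (proj1_sig a) (proj1_sig b)
  | Some a, None => P (proj1_sig a)
  | None, Some b => ~ P (proj1_sig b)
  | None, None => False
  end.

Lemma Blt_lin {T} (lt : T -> T -> Prop) (hlin : strict_linear lt) F P (hdc : dcut lt F P) :
  strict_linear (Blt lt F P).
Proof.
  destruct hlin as [hirr [htr htot]]. destruct hdc as [hsub hdc].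
  split; [|split].
  - intros [a|]; simpl; auto.
  - intros [a|] [b|] [c|]; simpl; intros H1 H2; try tauto.
    + eauto.
    + exact (hdc _ _ (proj2_sig a) (proj2_sig b) H1 H2).
    + destruct (htot (proj1_sig a) (proj1_sig c)) as [H|[H|H]]; auto.
      * rewrite H in H1; tauto.
      * exfalso; apply H2; exact (hdc _ _ (proj2_sig c) (proj2_sig a) H H1).
    + intro Hc; apply H1; exact (hdc _ _ (proj2_sig b) (proj2_sig c) H2 Hc).
  - intros [a|] [b|]; simpl.
    + destruct (htot (proj1_sig a) (proj1_sig b)) as [H|[H|H]]; auto.
      right; left; f_equal; apply sig_eq; auto.
    + destruct (classic (P (proj1_sig a))); auto.
    + destruct (classic (P (proj1_sig b))); auto.
    + auto.
Qed.

Lemma fin_opt {T} (F : T -> Prop) : finite_subset F -> finite_type (option {x | F x}).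
Proof.
  intros [l hl].
  exists (None :: map Some (flat_map (fun x => match excluded_middle_informative (F x) with
     | left h => [exist _ x h] | right _ => [] end) l)).
  intros [[x hx]|]; [right|left; auto].
  apply in_map. apply in_flat_map. exists x; split; [apply hl; auto|].
  destruct (excluded_middle_informative (F x)) as [h|h]; [|contradiction].
  left; f_equal; apply proof_irrelevance.
Qed.

Lemma one_new_opt {T} (F : T -> Prop) :
  exists z : option {x | F x}, (forall a, Some a <> z) /\ (forall y, (forall a, Some a <> y) -> y = z).
Proof.
  exists None; split; [intros a H; discriminate|].
  intros [a|] H; auto. exfalso; exact (H a eq_refl).
Qed.

Definition mkB {T} (lt : T -> T -> Prop) (hlin : strict_linear lt) (F P : T -> Prop)
  (hfin : finite_subset F) (hdc : dcut lt F P) : prime_ext lt F :=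
  @PrimeExt T lt F (option {x | F x}) (Blt lt F P) Some (Blt_lin lt hlin F P hdc) (fin_opt F hfin)
    (fun a b => iff_refl _) (one_new_opt F).

Lemma mkB_real {T} (lt : T -> T -> Prop) hlin F P hfin hdc C :
  realizes (mkB lt hlin F P hfin hdc) C ->
  exists y, region lt F P y /\ forall c, C c <-> F c \/ c = y.
Proof.
  intros [_ [hFC [g [hgC [hgs [hinj [hord hfix]]]]]]].
  simpl in *.
  exists (g None). split.
  - split.
    + intro Hy. assert (E : g (Some (exist _ _ Hy)) = g None) by (rewrite hfix; reflexivity).
      apply hinj in E; discriminate.
    + intros f Hf. pose proof (hord (Some (exist _ f Hf)) None) as H. simpl in H.
      rewrite hfix in H. simpl in H. tauto.
  - intros c; split.
    + intros Hc. destruct (hgs c Hc) as [[a|] E].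
      * left. rewrite <- E, hfix. exact (proj2_sig a).
      * right; auto.
    + intros [Hc|Hc]; [auto|subst; auto].
Qed.

Lemma realize_from_cut {T} (lt : T -> T -> Prop) (hlin : strict_linear lt) F
  (hfin : finite_subset F) (B : prime_ext lt F) :
  exists P, dcut lt F P /\ forall y, region lt F P y -> realizes B (fun t => F t \/ t = y).
Proof.
  destruct (pe_one_new B) as [z [Hz1 Hz2]].
  pose proof (pe_linear B) as [birr [btr btot]].
  destruct hlin as [hirr [htr htot]].
  set (P := fun f => exists a : {x | F x}, proj1_sig a = f /\ pe_lt B (pe_emb B a) z).
  assert (Pa : forall a, P (proj1_sig a) <-> pe_lt B (pe_emb B a) z).
  { intros a; split.
    - intros [a' [E H]]. apply sig_eq in E. subst; auto.
    - intros H; exists a; auto. }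
  assert (embinj : forall a a', pe_emb B a = pe_emb B a' -> a = a').
  { intros a a' E. apply sig_eq.
    destruct (htot (proj1_sig a) (proj1_sig a')) as [H|[H|H]]; auto;
    apply (pe_emb_order B) in H; rewrite E in H; destruct (birr _ H). }
  exists P. split.
  - split.
    + intros f [a [E _]]. rewrite <- E; exact (proj2_sig a).
    + intros f g Hf Hg Hfg [a [E Ha]].
      apply (Pa (exist _ f Hf)). simpl.
      apply btr with (pe_emb B a); auto.
      apply (pe_emb_order B). simpl. rewrite E. auto.
  - intros y [Hy Hyr].
    assert (G3 : forall b, b = z \/ exists a, pe_emb B a = b).
    { intros b. destruct (classic (exists a, pe_emb B a = b)) as [H|H]; auto.
      left. apply Hz2. intros a E. apply H; eauto. }
    set (g := fun b => match excluded_middle_informative (exists a, pe_emb B a = b) with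
               | left H => proj1_sig (proj1_sig (constructive_indefinite_description _ H))
               | right _ => y end).
    assert (G1 : forall a, g (pe_emb B a) = proj1_sig a).
    { intros a. unfold g. destruct (excluded_middle_informative _) as [H|H].
      - destruct (constructive_indefinite_description _ H) as [a' Ha']. simpl.
        apply embinj in Ha'. subst; auto.
      - exfalso; apply H; eauto. }
    assert (G2 : g z = y).
    { unfold g. destruct (excluded_middle_informative _) as [[a H]|H]; auto.
      exfalso; exact (Hz1 a H). }
    assert (hord : forall b1 b2, pe_lt B b1 b2 <-> lt (g b1) (g b2)).
    { intros b1 b2.
      destruct (G3 b1) as [E1|[a1 E1]]; destruct (G3 b2) as [E2|[a2 E2]]; subst b1 b2;
        rewrite ?G1, ?G2.
      - split; intro H; [destruct (birr _ H)|destruct (hirr _ H)].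
      - assert (Hne : pe_emb B a2 <> z) by apply Hz1.
        assert (Hne2 : proj1_sig a2 <> y) by (intro E; apply Hy; rewrite <- E; exact (proj2_sig a2)).
        assert (K : pe_lt B (pe_emb B a2) z <-> lt (proj1_sig a2) y)
          by (rewrite <- Pa; symmetry; apply Hyr; exact (proj2_sig a2)).
        split; intro H.
        + destruct (htot y (proj1_sig a2)) as [H'|[H'|H']]; auto.
          * congruence.
          * apply K in H'. destruct (birr _ (btr _ _ _ H H')).
        + destruct (btot z (pe_emb B a2)) as [H'|[H'|H']]; auto.
          * congruence.
          * apply K in H'. destruct (hirr _ (htr _ _ _ H H')).
      - rewrite <- Pa. symmetry. apply Hyr. exact (proj2_sig a1).
      - apply (pe_emb_order B). }
    split; [|split].
    + destruct hfin as [l hl]. exists (y :: l). intros x [Hx|Hx]; [right; auto|left; auto].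
    + intros x Hx; left; auto.
    + exists g. split; [|split; [|split; [|split]]].
      * intros b. destruct (G3 b) as [E|[a E]]; subst b; [rewrite G2; right; auto|].
        rewrite G1; left; exact (proj2_sig a).
      * intros c [Hc|Hc]; [exists (pe_emb B (exist _ c Hc)); rewrite G1; auto|].
        exists z; rewrite G2; auto.
      * intros b1 b2 E. destruct (btot b1 b2) as [H|[H|H]]; auto;
          apply hord in H; rewrite E in H; destruct (hirr _ H).
      * exact hord.
      * exact G1.
Qed.

Fixpoint lex {W} (ltW : W -> W -> Prop) (l m : list W) : Prop :=
  match l, m with
  | [], [] => False
  | [], _ :: _ => True
  | _ :: _, [] => False
  | a :: l', b :: m' => ltW a b \/ (a = b /\ lex ltW l' m')
  end.

Fixpoint dec {W} (ltW : W -> W -> Prop) (l : list W) : Prop :=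
  match l with
  | [] => True
  | a :: l' => match l' with [] => True | b :: _ => ltW b a end /\ dec ltW l'
  end.

Definition valid {W} (ltW : W -> W -> Prop) (l : list W) : Prop := l <> [] /\ dec ltW l.

Definition inY {W} (ltW : W -> W -> Prop) (g : W + bool) (l : list W) : Prop :=
  match l with [] => False | a :: _ => ext_lt ltW (inl a) g end.

Lemma lex_irrefl {W} (ltW : W -> W -> Prop) (hlin : strict_linear ltW) :
  forall l, ~ lex ltW l l.
Proof.
  destruct hlin as [hirr _]. induction l as [|a l IH]; simpl; [tauto|].
  intros [H|[_ H]]; [exact (hirr a H)|exact (IH H)].
Qed.

Lemma lex_trans {W} (ltW : W -> W -> Prop) (hlin : strict_linear ltW) :
  forall l m n, lex ltW l m -> lex ltW m n -> lex ltW l n.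
Proof.
  destruct hlin as [hirr [htr _]].
  induction l as [|a l IH]; intros [|b m] [|c n]; simpl; try tauto.
  intros [H1|[E1 H1]] [H2|[E2 H2]]; subst.
  - left; eauto.
  - left; auto.
  - left; auto.
  - right; split; eauto.
Qed.

Lemma lex_total {W} (ltW : W -> W -> Prop) (hlin : strict_linear ltW) :
  forall l m, lex ltW l m \/ l = m \/ lex ltW m l.
Proof.
  destruct hlin as [_ [_ htot]].
  induction l as [|a l IH]; intros [|b m]; simpl; auto.
  destruct (htot a b) as [H|[H|H]]; auto.
  subst. destruct (IH m) as [H|[H|H]]; subst; auto.
Qed.

Lemma ext_lin {W} (ltW : W -> W -> Prop) (hlin : strict_linear ltW) : strict_linear (ext_lt ltW).
Proof.
  destruct hlin as [hirr [htr htot]].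
  split; [|split].
  - intros [a|[|]]; simpl; auto.
  - intros [a|[|]] [b|[|]] [c|[|]]; simpl; try tauto; eauto.
  - intros [a|[|]] [b|[|]]; simpl; auto. destruct (htot a b) as [H|[H|H]]; subst; auto.
Qed.

Definition TT {W} (ltW : W -> W -> Prop) := {l : list W | valid ltW l}.
Definition ltT {W} (ltW : W -> W -> Prop) (x y : TT ltW) : Prop :=
  lex ltW (proj1_sig x) (proj1_sig y).

Lemma ltT_lin {W} (ltW : W -> W -> Prop) (hlin : strict_linear ltW) : strict_linear (ltT ltW).
Proof.
  split; [|split]; unfold ltT.
  - intros x; apply lex_irrefl; auto.
  - intros x y z; apply lex_trans; auto.
  - intros x y. destruct (lex_total ltW hlin (proj1_sig x) (proj1_sig y)) as [H|[H|H]]; auto.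
    right; left. apply sig_eq; auto.
Qed.

Fixpoint enc (l : list nat) : nat :=
  match l with [] => 0 | a :: l' => S (Cantor.to_nat (a, enc l')) end.

Lemma enc_inj : forall l m, enc l = enc m -> l = m.
Proof.
  induction l as [|a l IH]; intros [|b m]; intros H; try discriminate; auto.
  change (S (Cantor.to_nat (a, enc l)) = S (Cantor.to_nat (b, enc m))) in H.
  apply PeanoNat.Nat.succ_inj in H. pose proof (f_equal Cantor.of_nat H) as H'.
  rewrite !Cantor.cancel_of_to in H'. injection H'; intros E1 E2. subst; f_equal; auto.
Qed.

Lemma TT_countable {W} (ltW : W -> W -> Prop) : countable W -> countable (TT ltW).
Proof.
  intros [f hf]. exists (fun x => enc (map f (proj1_sig x))).
  intros x y E. apply sig_eq. apply enc_inj in E.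
  generalize (proj1_sig y) E. clear E. induction (proj1_sig x) as [|a l IH]; intros [|b m]; simpl;
    intros E; try discriminate; auto.
  injection E; intros. f_equal; auto.
Qed.

Definition Small {W} (ltW : W -> W -> Prop) (R : TT ltW -> Prop) (g : W + bool) : Prop :=
  exists d, ext_lt ltW d g /\ exists h : TT ltW -> list W,
    (forall x, R x -> valid ltW (h x) /\ inY ltW d (h x)) /\
    (forall x y, R x -> R y -> ltT ltW x y -> lex ltW (h x) (h y)).

Lemma small_mono {W} (ltW : W -> W -> Prop) R R' g :
  Small ltW R g -> (forall x, R' x -> R x) -> Small ltW R' g.
Proof.
  intros [d [hd [h [h1 h2]]]] Hs. exists d; split; auto. exists h; split; auto.
Qed.

Lemma inY_trans {W} (ltW : W -> W -> Prop) (hlin : strict_linear ltW) d g l :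
  ext_lt ltW d g -> inY ltW d l -> inY ltW g l.
Proof.
  destruct (ext_lin ltW hlin) as [_ [htr _]].
  destruct l as [|a l]; [intros _ []|intros H1 H2; exact (htr _ _ _ H2 H1)].
Qed.

Lemma small_split {W} (ltW : W -> W -> Prop) (hlin : strict_linear ltW) R g :
  Small ltW R g -> forall v, ext_lt ltW v g -> (forall u, ext_lt ltW u g -> ~ ext_lt ltW v u) ->
  forall y, R y -> Small ltW (fun x => R x /\ ltT ltW x y) v \/
                   Small ltW (fun x => R x /\ ltT ltW y x) v.
Proof.
  intros [d [hd [h [hv ho]]]] v hvg hmax y Hy.
  pose proof (ext_lin ltW hlin) as [eirr [etr etot]].
  pose proof hlin as [wirr [wtr wtot]].
  assert (hdv : ext_lt ltW d v \/ d = v).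
  { destruct (etot d v) as [H|[H|H]]; auto. exfalso; exact (hmax d hd H). }
  destruct (hv y Hy) as [[hne hdy] hiy].
  destruct (h y) as [|b l'] eqn:Ey; [contradiction|].
  change (ext_lt ltW (inl b) d) in hiy.
  assert (hbv : ext_lt ltW (inl b) v) by (destruct hdv as [H|H]; [eauto|subst; auto]).
  destruct (classic (exists u, ext_lt ltW (inl b) u /\ ext_lt ltW u v)) as [[u [hbu huv]]|Hno].
  - left. exists u. split; auto. exists h. split.
    + intros x [Rx ltxy]. destruct (hv x Rx) as [vx _]. split; auto.
      pose proof (ho x y Rx Hy ltxy) as Hl. rewrite Ey in Hl.
      destruct (h x) as [|a m]; [destruct vx; contradiction|].
      change (ltW a b \/ (a = b /\ lex ltW m l')) in Hl. change (ext_lt ltW (inl a) u).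
      destruct Hl as [Hl|[Hl _]]; [|subst; auto].
      exact (etr (inl a) (inl b) u Hl hbu).
    + intros x1 x2 [H1 _] [H2 _] H. apply ho; auto.
  - right. exists (inl b). split; auto.
    assert (Kab : forall x, R x -> ltT ltW y x -> exists t', h x = b :: t' /\ lex ltW l' t' /\
                 valid ltW t' /\ inY ltW (inl b) t').
    { intros x Rx Hyx. destruct (hv x Rx) as [[hne' hdx] hix].
      pose proof (ho y x Hy Rx Hyx) as Hl. rewrite Ey in Hl.
      destruct (h x) as [|a t']; [contradiction|].
      change (ltW b a \/ (b = a /\ lex ltW l' t')) in Hl. change (ext_lt ltW (inl a) d) in hix.
      assert (hav : ext_lt ltW (inl a) v) by (destruct hdv as [H|H]; [eauto|subst; auto]).
      destruct Hl as [Hl|[E Hl]].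
      - exfalso. apply Hno. exists (inl a); auto.
      - subst a. exists t'. split; auto. split; auto.
        destruct t' as [|c t'']; [destruct l'; simpl in Hl; contradiction|].
        simpl in hdx. destruct hdx as [hcb hdt].
        split; [split; [discriminate|exact hdt]|exact hcb]. }
    exists (fun x => tl (h x)). split.
    + intros x [Rx Hyx]. destruct (Kab x Rx Hyx) as [t' [E [_ [H1 H2]]]].
      rewrite E; simpl; auto.
    + intros x1 x2 [R1 H1] [R2 H2] H12.
      destruct (Kab x1 R1 H1) as [t1 [E1 _]]. destruct (Kab x2 R2 H2) as [t2 [E2 _]].
      pose proof (ho x1 x2 R1 R2 H12) as Hl. rewrite E1, E2 in Hl |- *. simpl in Hl |- *.
      destruct Hl as [Hl|[_ Hl]]; auto. destruct (wirr _ Hl).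
Qed.

Definition UB {W} (ltW : W -> W -> Prop) (g : W + bool) (F : TT ltW -> Prop) : Prop :=
  exists P, dcut (ltT ltW) F P /\ Small ltW (region (ltT ltW) F P) g.

Theorem UB_thm {W} (ltW : W -> W -> Prop) (hlin : strict_linear ltW) (hwf : well_founded ltW) :
  forall g F, finite_subset F -> UB ltW g F -> ~ rkge (ltT ltW) (ext_lt_wf hwf) g F.
Proof.
  pose proof (ltT_lin ltW hlin) as hTlin.
  pose proof hTlin as [tirr [ttr ttot]].
  intro g. induction g as [g IH] using (well_founded_ind (ext_lt_wf hwf)).
  intros F hfin [P [hdc hS]] Hr.
  apply rkge_eq in Hr. destruct Hr as [Hsucc Hlim].
  destruct (classic (exists v, ext_lt ltW v g /\ forall u, ext_lt ltW u g -> ~ ext_lt ltW v u))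
    as [[v [hv hmax]]|Hno].
  - destruct (Hsucc v hv hmax (mkB (ltT ltW) hTlin F P hfin hdc)) as [C [HC Hr]].
    simpl in Hr.
    destruct (mkB_real _ _ _ _ _ _ _ HC) as [y [Hy HCy]].
    pose proof Hy as [HyF HyP].
    destruct hdc as [hsub hdcc].
    destruct (small_split ltW hlin _ _ hS v hv hmax y Hy) as [HS|HS].
    + apply (IH v hv C (proj1 HC)); [|exact Hr].
      exists P. split; [split|].
      * intros f Hf; apply HCy; left; auto.
      * intros f g' Hf Hg Hfg Pg. apply HCy in Hf. destruct Hf as [Hf|Hf]; [eauto|].
        subst f. exfalso. apply HyP in Pg; [|auto]. exact (tirr _ (ttr _ _ _ Hfg Pg)).
      * apply (small_mono _ _ _ _ HS). intros t [Ht Htr]. 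
        assert (HtF : ~ F t) by (intro; apply Ht; apply HCy; auto).
        assert (Hty : t <> y) by (intro; apply Ht; apply HCy; auto).
        split; [split; auto; intros f Hf; apply Htr; apply HCy; auto|].
        destruct (ttot t y) as [H|[H|H]]; auto; [contradiction|].
        exfalso. apply Htr in H; [apply HyF; auto|apply HCy; auto].
    + apply (IH v hv C (proj1 HC)); [|exact Hr].
      exists (fun f => P f \/ f = y). split; [split|].
      * intros f [Hf|Hf]; apply HCy; [left; auto|right; auto].
      * intros f g' Hf Hg Hfg [Pg|Pg].
        -- apply HCy in Hf. destruct Hf as [Hf|Hf]; [left; eauto|right; auto].
        -- subst g'. apply HCy in Hf. destruct Hf as [Hf|Hf]; [left|right; auto].
           apply HyP; auto.
      * apply (small_mono _ _ _ _ HS). intros t [Ht Htr].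
        assert (HtF : ~ F t) by (intro; apply Ht; apply HCy; auto).
        split; [split; auto|].
        -- intros f Hf. rewrite (Htr f) by (apply HCy; auto).
           split; [intros [H|H]; auto; subst; contradiction|auto].
        -- apply Htr; [apply HCy; auto|auto].
  - assert (Hl : forall v, ext_lt ltW v g -> exists u, ext_lt ltW v u /\ ext_lt ltW u g).
    { intros v hv. apply NNPP; intro Hn. apply Hno. exists v; split; auto.
      intros u hu hvu. apply Hn; eauto. }
    destruct hS as [d [hd hSS]].
    destruct (Hl d hd) as [u [hdu hug]].
    apply (IH u hug F hfin); [|exact (Hlim Hl u hug)].
    exists P; split; auto. exists d; split; auto.
Qed.

Definition LB {W} (ltW : W -> W -> Prop) (g : W + bool) (F : TT ltW -> Prop) : Prop :=
  forall P, dcut (ltT ltW) F P -> exists e : TT ltW -> TT ltW,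
    (forall s t, inY ltW g (proj1_sig s) -> inY ltW g (proj1_sig t) -> ltT ltW s t ->
       ltT ltW (e s) (e t)) /\
    (forall t, inY ltW g (proj1_sig t) -> region (ltT ltW) F P (e t)).

Definition mk {W} (ltW : W -> W -> Prop) (d : TT ltW) (l : list W) : TT ltW :=
  match excluded_middle_informative (valid ltW l) with
  | left h => exist _ l h
  | right _ => d
  end.

Lemma mk_val {W} (ltW : W -> W -> Prop) d l : valid ltW l -> proj1_sig (mk ltW d l) = l.
Proof.
  intros H. unfold mk. destruct (excluded_middle_informative _); [reflexivity|contradiction].
Qed.

Lemma valid_cons {W} (ltW : W -> W -> Prop) m (t : TT ltW) :
  inY ltW (inl m) (proj1_sig t) -> valid ltW (m :: proj1_sig t).
Proof.
  destruct t as [[|a l] [hne hd]]; simpl; [contradiction|].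
  intros H. split; [discriminate|]. split; auto.
Qed.

Lemma valid_single {W} (ltW : W -> W -> Prop) m : valid ltW [m].
Proof. split; [discriminate|simpl; auto]. Qed.

Theorem LB_thm {W} (ltW : W -> W -> Prop) (hlin : strict_linear ltW) (hwf : well_founded ltW) :
  forall g, g <> inr true -> forall F, finite_subset F -> LB ltW g F ->
  rkge (ltT ltW) (ext_lt_wf hwf) g F.
Proof.
  pose proof (ltT_lin ltW hlin) as hTlin.
  pose proof hTlin as [tirr [ttr ttot]].
  pose proof (ext_lin ltW hlin) as [eirr [etr etot]].
  assert (notop : forall v g, ext_lt ltW v g -> v <> inr true).
  { intros [a|[|]] [b|[|]]; simpl; intros; try discriminate; contradiction. }
  intro g. induction g as [g IH] using (well_founded_ind (ext_lt_wf hwf)).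
  intros hg F hfin HL. apply rkge_eq. split.
  - intros v hv hmax B.
    destruct v as [m|[|]]; [|destruct g as [?|[|]]; simpl in hv; try contradiction; congruence
                          |destruct g as [?|[|]]; simpl in hv; contradiction].
    destruct (realize_from_cut _ hTlin F hfin B) as [P [hdc Hreal]].
    destruct (HL P hdc) as [e [he1 he2]].
    set (vm := exist _ [m] (valid_single ltW m) : TT ltW).
    set (y := e vm).
    assert (Hy : region (ltT ltW) F P y) by (apply he2; exact hv).
    pose proof Hy as [HyF HyP].
    exists (fun t => F t \/ t = y). split; [apply Hreal; exact Hy|].
    apply (IH (inl m) hv); [discriminate| |].
    { destruct hfin as [l hl]; exists (y :: l); intros x [Hx|Hx]; [right; auto|left; auto]. }
    intros P' [hsub' hdc'].
    set (Pf := fun f => P' f /\ F f).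
    assert (hdcf : dcut (ltT ltW) F Pf).
    { split; [intros f [_ H]; auto|].
      intros f g' Hf Hg Hfg [Pg _]. split; auto. apply (hdc' f g'); auto. }
    assert (inYm : forall t : TT ltW, inY ltW (inl m) (proj1_sig t) -> inY ltW g (proj1_sig t))
      by (intros t; apply inY_trans; auto).
    destruct (classic (forall f, F f -> (Pf f <-> P f))) as [Heq|Hne].
    + destruct (classic (P' y)) as [Py|Py].
      * exists (fun t => e (mk ltW vm (m :: proj1_sig t))). split.
        -- intros s t hs ht hst. apply he1.
           ++ rewrite mk_val by (apply valid_cons; auto). exact hv.
           ++ rewrite mk_val by (apply valid_cons; auto). exact hv.
           ++ unfold ltT. rewrite !mk_val by (apply valid_cons; auto). simpl. right; auto.
        -- intros t ht. set (t' := mk ltW vm (m :: proj1_sig t)).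
           assert (ht' : inY ltW g (proj1_sig t')) by
             (unfold t'; rewrite mk_val by (apply valid_cons; auto); exact hv).
           destruct (he2 t' ht') as [HF HP].
           assert (Hyt : ltT ltW y (e t')).
           { apply he1; [exact hv|exact ht'|]. unfold ltT, t'.
             rewrite mk_val by (apply valid_cons; auto). simpl. right. split; auto.
             pose proof (proj1 (proj2_sig t)) as hne.
             destruct (proj1_sig t) as [|a l]; [contradiction|simpl; auto]. }
           split.
           ++ intros [H|H]; [contradiction|]. rewrite H in Hyt. exact (tirr _ Hyt).
           ++ intros f [Hf|Hf].
              ** rewrite HP by auto. rewrite <- Heq by auto. unfold Pf; tauto.
              ** subst f. tauto.
      * exists e. split.
        -- intros s t hs ht hst. apply he1; auto.
        -- intros t ht. destruct (he2 t (inYm t ht)) as [HF HP].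
           assert (Hty : ltT ltW (e t) y).
           { apply he1; [exact (inYm t ht)|exact hv|]. unfold ltT. simpl.
             revert ht. destruct (proj1_sig t) as [|a l]; intros ht; [contradiction|left; exact ht]. }
           split.
           ++ intros [H|H]; [contradiction|]. rewrite H in Hty. exact (tirr _ Hty).
           ++ intros f [Hf|Hf].
              ** rewrite HP by auto. rewrite <- Heq by auto. unfold Pf; tauto.
              ** subst f. split; [intro H; destruct (tirr _ (ttr _ _ _ H Hty))|tauto].
    + apply not_all_ex_not in Hne. destruct Hne as [f0 Hf0].
      apply imply_to_and in Hf0. destruct Hf0 as [Hf0 Hnf].
      destruct (HL Pf hdcf) as [e1 [h1 h2]].
      exists e1. split.
      * intros s t hs ht hst. apply h1; auto.
      * intros t ht. destruct (h2 t (inYm t ht)) as [HF HP].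
        assert (Hk : (ltT ltW y (e1 t) <-> P' y) /\ e1 t <> y).
        { destruct (classic (P f0)) as [Pf0|Pf0].
          - assert (nPf : ~ Pf f0) by tauto.
            assert (nP' : ~ P' f0) by (intro; apply nPf; split; auto).
            assert (f0y : ltT ltW f0 y) by (apply HyP; auto).
            assert (tf0 : ltT ltW (e1 t) f0).
            { destruct (ttot (e1 t) f0) as [H|[H|H]]; auto.
              - subst; contradiction.
              - apply HP in H; auto; contradiction. }
            assert (ty : ltT ltW (e1 t) y) by eauto.
            assert (nPy : ~ P' y) by (intro Py; apply nP'; apply (hdc' f0 y); auto).
            split; [split; intro H; [destruct (tirr _ (ttr _ _ _ H ty))|contradiction]|].
            intro E; rewrite E in ty; exact (tirr _ ty).
          - assert (Pff : Pf f0) by tauto.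
            destruct Pff as [P'f0 _].
            assert (nf0y : ~ ltT ltW f0 y) by (intro H; apply Pf0; apply HyP; auto).
            assert (yf0 : ltT ltW y f0).
            { destruct (ttot y f0) as [H|[H|H]]; auto.
              - subst; contradiction.
              - contradiction. }
            assert (f0t : ltT ltW f0 (e1 t)) by (apply HP; auto; split; auto).
            assert (yt : ltT ltW y (e1 t)) by eauto.
            split; [split; intro; auto; apply (hdc' y f0); auto|].
            intro E; rewrite E in yt; exact (tirr _ yt). }
        destruct Hk as [Hk1 Hk2].
        split.
        -- intros [H|H]; contradiction.
        -- intros f [Hf|Hf].
           ++ rewrite HP by auto. unfold Pf; tauto.
           ++ subst f; exact Hk1.
  - intros Hl v hv. apply IH; auto.
    + exact (notop v g hv).
    + intros P hdc. destruct (HL P hdc) as [e [he1 he2]]. exists e. split.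
      * intros s t hs ht; apply he1; eapply inY_trans; eauto.
      * intros t ht; apply he2; eapply inY_trans; eauto.
Qed.

Theorem corollary6p14 :
  forall (W : Type) (ltW : W -> W -> Prop)
    (hlin : strict_linear ltW) (hwf : well_founded ltW) (hc : countable W),
  exists (T : Type) (lt : T -> T -> Prop),
    strict_linear lt /\ countable T /\ rank_is lt hwf.
Proof.
  intros W ltW hlin hwf hc.
  exists (TT ltW), (ltT ltW). split; [apply ltT_lin; auto|split; [apply TT_countable; auto|]].
  intros g. split.
  - intros Hr. destruct g as [a|[|]]; [exact I| |exact I].
    exfalso. apply (UB_thm ltW hlin hwf (inr true) (fun _ => False)); auto.
    + exists []. intros x [].
    + exists (fun _ => False). split; [split; [auto|intros; contradiction]|].
      exists (inr false). split; [exact I|].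
      exists (@proj1_sig _ _). split.
      * intros x _. split; [exact (proj2_sig x)|].
        destruct x as [[|a l] [hne hd]]; simpl; [contradiction|exact I].
      * intros x y _ _ H; exact H.
  - intros Hg. apply LB_thm; auto.
    + destruct g as [?|[|]]; simpl in Hg; try discriminate; contradiction.
    + exists []. intros x [].
    + intros P hdc. exists (fun t => t). split; auto.
      intros t _. split; [intros []|intros f []].
Qed.
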